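(* Let $W \in \mathbb{R}^{m \times n}$ have a directed spanning set of $\mathbb{R}^n$ with respect to every $x \in \mathbb{R}^n$. Then there exists $C(W) > 0$ such that for all $x_0, x_1 \in \mathbb{R}^n$, $$\|\operatorname{ReLU}(Wx_0) - \operatorname{ReLU}(Wx_1)\|_2 \geq C(W)\, \|x_0 - x_1\|_2,$$ where one may take $C(W) = \frac{1}{\sqrt{2m}} \min_{x \in \mathbb{R}^n} \sigma\big(W|_{S(x,W)}\big)$.
   Context: $\operatorname{ReLU}(y)=\max(y,0)$ componentwise. For $W$ with rows $w_1,\dots,w_m$ and $x\in\mathbb{R}^n$, $S(x,W) = \{ j \in \{1,\dots,m\} : \langle w_j, x\rangle \geq 0\}$; for an index set $\mathcal{I}$, $W|_{\mathcal{I}}$ is the $m\times n$ matrix whose $j$-th row equals $w_j$ if $j\in\mathcal{I}$ and is zero otherwise. $\sigma(M)$ denotes the smallest singular value of $M$ (i.e. $\min_{\|x\|_2=1}\|Mx\|_2$). $W$ has a directed spanning set of $\mathbb{R}^n$ w.r.t. $x$ if the rows $\{w_j : j \in S(x,W)\}$ span $\mathbb{R}^n$. *)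

(* Defs.v *)
From HB Require Import structures.
From mathcomp Require Import all_boot all_order all_algebra.
From mathcomp Require Import classical_sets boolp reals.
Set Implicit Arguments. Unset Strict Implicit. Unset Printing Implicit Defensive.
Import Order.TTheory GRing.Theory Num.Theory.
Local Open Scope ring_scope.
Local Open Scope classical_set_scope.

Section Defs.
Variable R : realType.

Definition norm2 (k : nat) (v : 'cV[R]_k) : R :=
  Num.sqrt (\sum_(i < k) v i 0 ^+ 2).

Definition relu (k : nat) (v : 'cV[R]_k) : 'cV[R]_k :=
  \col_i Num.max (v i 0) 0.

Definition actset (m n : nat) (x : 'cV[R]_n) (W : 'M[R]_(m, n)) : {set 'I_m} :=
  [set j | 0 <= (W *m x) j 0].

Definition restr (m n : nat) (W : 'M[R]_(m, n)) (I : {set 'I_m}) : 'M[R]_(m, n) :=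
  \matrix_(j, k) (if j \in I then W j k else 0).

Definition sigma_min (m n : nat) (M : 'M[R]_(m, n)) : R :=
  inf [set norm2 (M *m x) | x in [set x : 'cV[R]_n | norm2 x = 1]].

Definition directed_spanning (m n : nat) (W : 'M[R]_(m, n)) (x : 'cV[R]_n) : Prop :=
  forall v : 'rV[R]_n, exists c : 'I_m -> R,
    v = \sum_(j in actset x W) c j *: row j W.

Definition CW (m n : nat) (W : 'M[R]_(m, n)) : R :=
  (Num.sqrt (2 * m%:R))^-1 *
  inf [set sigma_min (restr W (actset x W)) | x in [set: 'cV[R]_n]].

End Defs.

(* Main.v *)
Require Import Defs.
From HB Require Import structures.
From mathcomp Require Import all_boot all_order all_algebra.
From mathcomp Require Import classical_sets boolp reals.
From mathcomp Require Import lra.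
Import Order.TTheory GRing.Theory Num.Theory.
Local Open Scope ring_scope.

Section Aux.
Context {R : realType}.

Lemma norm2_ge0 k (v : 'cV[R]_k) : 0 <= norm2 v.
Proof. exact: sqrtr_ge0. Qed.

Lemma norm2Z k (c : R) (v : 'cV[R]_k) : norm2 (c *: v) = `|c| * norm2 v.
Proof.
rewrite /norm2 (eq_bigr (fun i => c ^+ 2 * v i 0 ^+ 2)); last first.
  by move=> i _; rewrite mxE exprMn.
by rewrite -mulr_sumr sqrtrM ?sqr_ge0 // sqrtr_sqr.
Qed.

Lemma norm2_le k (u v : 'cV[R]_k) (c : R) : 0 <= c ->
  (forall i, u i 0 ^+ 2 <= c ^+ 2 * v i 0 ^+ 2) -> norm2 u <= c * norm2 v.
Proof.
move=> c0 h; rewrite -[c]ger0_norm // -norm2Z /norm2 ler_sqrt; last first.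
  by apply: sumr_ge0 => i _; exact: sqr_ge0.
by apply: ler_sum => i _; rewrite mxE exprMn; exact: h.
Qed.

Lemma inf_ge0 (E : set R) : (forall y, E y -> 0 <= y) -> 0 <= inf E.
Proof.
move=> h; have [[ne _]|nh] := pselect (has_inf E).
  by apply: lb_le_inf => // y /h.
by rewrite inf_out.
Qed.

Lemma sigma_min_ge0 m n (M : 'M[R]_(m,n)) : 0 <= sigma_min M.
Proof. by apply: inf_ge0 => y [x _ <-]; exact: norm2_ge0. Qed.

Lemma sigma_min_le m n (M : 'M[R]_(m,n)) (d : 'cV[R]_n) :
  sigma_min M * norm2 d <= norm2 (M *m d).
Proof.
have [->|dn0] := eqVneq (norm2 d) 0; first by rewrite mulr0 norm2_ge0.
have dp : 0 < norm2 d by rewrite lt0r dn0 norm2_ge0.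
pose u := (norm2 d)^-1 *: d.
have u1 : norm2 u = 1 by rewrite norm2Z ger0_norm ?invr_ge0 ?norm2_ge0 // mulVf.
have h : sigma_min M <= norm2 (M *m u).
  by apply: ge_inf; [exists 0 => y [x _ <-]; exact: norm2_ge0 | exists u].
move: h; rewrite /u -scalemxAr norm2Z ger0_norm ?invr_ge0 ?norm2_ge0 // => h.
by rewrite -(ler_pM2r dp) mulrAC mulVf // mul1r in h.
Qed.

Lemma restr_mulE m n (W : 'M[R]_(m,n)) I (v : 'cV[R]_n) j :
  (restr W I *m v) j 0 = if j \in I then (W *m v) j 0 else 0.
Proof.
rewrite !mxE; case: ifP => jI.
  by apply: eq_bigr => k _; rewrite mxE jI.
by rewrite big1 // => k _; rewrite mxE jI mul0r.
Qed.

Lemma pt_ineq (a b : R) : 0 <= a + b ->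
  (a - b) ^+ 2 <= 2 ^+ 2 * (Num.max a 0 - Num.max b 0) ^+ 2.
Proof.
move=> h; rewrite !maxEle; case: (leP a 0) => h1; case: (leP b 0) => h2;
  have := sqr_ge0 (a - b); nra.
Qed.

Lemma key m n (W : 'M[R]_(m,n)) x0 x1 :
  norm2 (restr W (actset (x0 + x1) W) *m (x0 - x1))
  <= 2 * norm2 (relu (W *m x0) - relu (W *m x1)).
Proof.
apply: norm2_le => // i; rewrite restr_mulE /actset inE.
rewrite mulmxDr mulmxBr !mxE.
case: ifP => h; last by rewrite expr0n /= mulr_ge0 ?sqr_ge0.
exact: pt_ineq.
Qed.


Lemma abs_le_norm2 k (y : 'cV[R]_k) j : `|y j 0| <= norm2 y.
Proof.
rewrite -sqrtr_sqr /norm2 ler_sqrt; last by apply: sumr_ge0 => i _; exact: sqr_ge0.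
rewrite (bigD1 j) //= lerDl; apply: sumr_ge0 => i _; exact: sqr_ge0.
Qed.

Lemma sigma_pos m n (W : 'M[R]_(m,n)) (I : {set 'I_m}) : (0 < n)%N ->
  (forall v : 'rV[R]_n, exists c : 'I_m -> R, v = \sum_(j in I) c j *: row j W) ->
  0 < sigma_min (restr W I).
Proof.
move=> hn hs.
have /choice [c hc] : forall k : 'I_n, exists c : 'I_m -> R,
    delta_mx (0 : 'I_1) k = \sum_(j in I) c j *: row j W by move=> k; exact: hs.
pose B k := \sum_j `|c k j|.
pose K := \sum_k B k ^+ 2.
have K0 : 0 <= K by apply: sumr_ge0 => k _; exact: sqr_ge0.
have hx : forall x : 'cV[R]_n, norm2 x <= Num.sqrt K * norm2 (restr W I *m x).
  move=> x; set y := restr W I *m x.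
  have ek : forall k, x k 0 = \sum_j c k j * y j 0.
    move=> k.
    have <- : (delta_mx (0 : 'I_1) k *m x) 0 0 = x k 0 by rewrite -rowE mxE.
    rewrite hc mulmx_suml summxE big_mkcond /=; apply: eq_bigr => j _.
    rewrite /y restr_mulE; case: ifP => _; last by rewrite mulr0.
    by rewrite -scalemxAl mxE -row_mul mxE.
  have bk : forall k, x k 0 ^+ 2 <= B k ^+ 2 * norm2 y ^+ 2.
    move=> k; have h : `|x k 0| <= B k * norm2 y.
      rewrite ek /B mulr_suml; apply: le_trans (ler_norm_sum _ _ _) _.
      apply: ler_sum => j _; rewrite normrM; apply: ler_wpM2l => //.
      exact: abs_le_norm2.
    have h0 := normr_ge0 (x k 0).
    rewrite -exprMn -[x k 0 ^+ 2]real_normK ?num_real //; nra.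
  rewrite /norm2 -sqrtrM // ler_sqrt; last first.
    by apply: mulr_ge0 => //; apply: sumr_ge0 => i _; exact: sqr_ge0.
  rewrite -(@sqr_sqrtr _ (\sum_i y i 0 ^+ 2)); last first.
    by apply: sumr_ge0 => i _; exact: sqr_ge0.
  by rewrite /K mulr_suml; apply: ler_sum => k _; exact: bk.
have sK := sqrtr_ge0 K.
have lbp : 0 < (Num.sqrt K + 1)^-1 by rewrite invr_gt0; lra.
apply: (lt_le_trans lbp); apply: lb_le_inf.
  pose e : 'cV[R]_n := delta_mx (Ordinal hn) 0.
  exists (norm2 (restr W I *m e)); exists e => //.
  rewrite /= /norm2 (bigD1 (Ordinal hn)) //= big1 ?addr0.
    by rewrite mxE !eqxx expr1n sqrtr1.
  by move=> i /negbTE hi; rewrite mxE hi /= expr0n.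
move=> _ [x /= xn1 <-]; have := hx x; rewrite xn1 => h.
have h0 : 0 <= norm2 (restr W I *m x) by exact: norm2_ge0.
rewrite -[_^-1]mul1r ler_pdivrMr; last lra.
nra.
Qed.


Lemma m_ge2 m n (W : 'M[R]_(m,n)) : (0 < n)%N ->
  (forall x : 'cV[R]_n, directed_spanning W x) -> (1 < m)%N.
Proof.
move=> hn hs; rewrite ltnNge; apply/negP => hm.
pose v : 'rV[R]_n := const_mx 1.
pose u : 'cV[R]_n := W^T *m const_mx 1.
have [c hc] := hs (- u) v.
have hz : forall j, j \in actset (- u) W -> row j W = 0.
  move=> j; rewrite inE mulmxN mxE oppr_ge0 => hj.
  have eqi : forall i : 'I_m, i = j.
    move=> i; apply: val_inj => /=.
    have := leq_trans (ltn_ord i) hm; rewrite ltnS leqn0 => /eqP ->.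
    by have := leq_trans (ltn_ord j) hm; rewrite ltnS leqn0 => /eqP ->.
  have uk : forall k, u k 0 = W j k.
    move=> k; rewrite !mxE (bigD1 j) //= big1 ?addr0; first by rewrite !mxE mulr1.
    by move=> i; rewrite (eqi i) eqxx.
  rewrite mxE (eq_bigr (fun k => W j k * W j k)) in hj; last by move=> k _; rewrite uk.
  have hs0 : \sum_k W j k * W j k = 0.
    apply/eqP; rewrite eq_le hj /=.
    by apply: sumr_ge0 => k _; rewrite -expr2 sqr_ge0.
  apply/rowP => k; rewrite !mxE.
  have ge : forall k', true -> 0 <= W j k' * W j k' by move=> k' _; rewrite -expr2 sqr_ge0.
  have := psumr_eq0P ge hs0 (i := k) isT.
  by move/eqP; rewrite mulf_eq0 orbb => /eqP.
have : v = 0 by rewrite hc big1 // => j /hz ->; rewrite scaler0.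
move=> /matrixP/(_ 0 (Ordinal hn)); rewrite !mxE => /eqP; rewrite oner_eq0.
done.
Qed.

End Aux.

Theorem theorem3 (R : realType) (m n : nat) (W : 'M[R]_(m, n))
  (hspan : forall x : 'cV[R]_n, directed_spanning W x) :
  (exists2 C : R, 0 < C &
     forall x0 x1 : 'cV[R]_n,
       C * norm2 (x0 - x1) <= norm2 (relu (W *m x0) - relu (W *m x1)))
  /\ (forall x0 x1 : 'cV[R]_n,
       CW W * norm2 (x0 - x1) <= norm2 (relu (W *m x0) - relu (W *m x1)))
  /\ ((0 < n)%N -> 0 < CW W).
Proof.
have [hn0|hn] := posnP n.
  subst n.
  have z : forall d : 'cV[R]_0, norm2 d = 0 by move=> d; rewrite /norm2 big_ord0 sqrtr0.
  split; first by exists 1 => // x0 x1; rewrite z mulr0 norm2_ge0.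
  by split => // x0 x1; rewrite z mulr0 norm2_ge0.
have m2 := m_ge2 _ _ W hn hspan.
set mu := inf [set sigma_min (restr W (actset x W)) | x in [set: 'cV[R]_n]].
have mupos : 0 < mu.
  pose g (I : {set 'I_m}) : R :=
    if pselect (exists x, actset x W = I) then sigma_min (restr W I) else 1.
  pose eps := \big[Order.min/1]_(I : {set 'I_m}) g I.
  have epspos : 0 < eps.
    apply: lt_bigmin => //= I _; rewrite /g; case: pselect => [[x xI]|_] /=.
      by move: (sigma_pos _ _ _ _ hn (hspan x)); rewrite xI.
    exact: ltr01.
  apply: (lt_le_trans epspos); apply: lb_le_inf.
    by exists (sigma_min (restr W (actset 0 W))); exists 0.
  move=> _ [x _ <-]; apply: le_trans (bigmin_le _ (actset x W) _) _.
  rewrite /g; case: pselect => // -[]; by exists x.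
have CWe : CW W = (Num.sqrt (2 * m%:R))^-1 * mu by [].
have sq0 : 0 < Num.sqrt (2 * m%:R :> R).
  by rewrite sqrtr_gt0 mulr_gt0 // ltr0n; apply: leq_trans m2.
have sq : (Num.sqrt (2 * m%:R))^-1 <= 2^-1 :> R.
  rewrite lef_pV2 ?posrE //.
  have h4 : Num.sqrt (2 ^+ 2) <= Num.sqrt (2 * m%:R :> R).
    rewrite ler_sqrt; last by rewrite mulr_ge0.
    by rewrite expr2 ler_wpM2l // ler_nat.
  by rewrite sqrtr_sqr ger0_norm in h4.
have part2 : forall x0 x1 : 'cV[R]_n,
    CW W * norm2 (x0 - x1) <= norm2 (relu (W *m x0) - relu (W *m x1)).
  move=> x0 x1; set M := restr W (actset (x0 + x1) W).
  have h1 : mu <= sigma_min M.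
    apply: ge_inf; last by exists (x0 + x1).
    by exists 0 => y [x _ <-]; exact: sigma_min_ge0.
  have h2 := sigma_min_le _ _ M (x0 - x1).
  have h3 := key _ _ W x0 x1.
  have d0 : 0 <= norm2 (x0 - x1) by exact: norm2_ge0.
  have f1 : mu * norm2 (x0 - x1) <= sigma_min M * norm2 (x0 - x1) by exact: ler_wpM2r.
  have f0 : 0 <= mu * norm2 (x0 - x1) by rewrite mulr_ge0 // ltW.
  have s0 : 0 <= (Num.sqrt (2 * m%:R))^-1 :> R by rewrite invr_ge0 ltW.
  rewrite CWe -mulrA; move: f1 f0 s0 sq h2 h3.
  set s := (Num.sqrt _)^-1; set t := mu * _; nra.
split; last by split => // _; rewrite CWe mulr_gt0 // invr_gt0.
exists (CW W) => //; by rewrite CWe mulr_gt0 // invr_gt0.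
Qed.
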